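(* Let $F, F'$ be minimally unsatisfiable clause-sets with $F \to^{*}_{\mathrm{sDP}} F'$. Then $\mathrm{minvdeg}(F') \ge \mathrm{minvdeg}(F)$.
   Context: Literals come with a fixed-point-free involution $x \mapsto \overline{x}$; variables are positive literals. A clause is a finite set $C$ of literals with $C \cap \overline{C} = \emptyset$; a clause-set is a finite set of clauses. A clause-set is minimally unsatisfiable if it is unsatisfiable but becomes satisfiable upon removing any clause. $\mathrm{ld}_F(x)$ is the number of clauses of $F$ containing literal $x$; $\mathrm{vdeg}_F(v) = \mathrm{ld}_F(v) + \mathrm{ld}_F(\overline{v})$; $\mathrm{minvdeg}(F) = \min_{v \in \mathrm{var}(F)} \mathrm{vdeg}_F(v)$ if $F$ has variables, and $+\infty$ otherwise. A variable $v$ is singular in $F$ if $\min(\mathrm{ld}_F(v), \mathrm{ld}_F(\overline{v})) = 1$. DP-reduction on $v$: $\mathrm{DP}_v(F) = \{C \in F : v \notin \mathrm{var}(C)\} \cup \{(C \cup D) \setminus \{v, \overline{v}\} : C, D \in F,\ C \cap \overline{D} = \{v\}\}$. $F \to_{\mathrm{sDP}} F'$ holds if $F' = \mathrm{DP}_v(F)$ for some singular variable $v$ of $F$; $\to^{*}_{\mathrm{sDP}}$ is its reflexive-transitive closure. *)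

(* Defs.v *)
From mathcomp Require Import all_boot finmap.
From Stdlib Require Import Relations.
Set Implicit Arguments. Unset Strict Implicit. Unset Printing Implicit Defensive.
Local Open Scope fset_scope.

(* Variables are natural numbers; a literal is a pair (v, b): b = true is the
   positive literal v, b = false its complement.  The fixed-point-free
   involution is [compl]. *)
Definition var_t := nat.
Definition lit := (nat * bool)%type.
Definition compl (x : lit) : lit := (x.1, ~~ x.2).
Definition pos (v : var_t) : lit := (v, true).
Definition neg (v : var_t) : lit := (v, false).

Definition clause := {fset lit}.
Definition clauseset := {fset clause}.

Definition compl_cl (C : clause) : clause := [fset compl x | x in C].

Definition is_clause (C : clause) : bool := C `&` compl_cl C == fset0.
Definition is_clauseset (F : clauseset) : bool := [forall C : F, is_clause (val C)].

Definition var_cl (C : clause) : {fset nat} := [fset x.1 | x in C].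
Definition var (F : clauseset) : {fset nat} :=
  \bigcup_(C <- F) var_cl C.

Definition lit_sat (f : nat -> bool) (x : lit) : bool := f x.1 == x.2.
Definition cl_sat (f : nat -> bool) (C : clause) : bool := [exists x : C, lit_sat f (val x)].
Definition cs_sat (f : nat -> bool) (F : clauseset) : bool := [forall C : F, cl_sat f (val C)].
Definition satisfiable (F : clauseset) : Prop := exists f, cs_sat f F.

Definition min_unsat (F : clauseset) : Prop :=
  is_clauseset F /\ ~ satisfiable F /\
  forall C, C \in F -> satisfiable (F `\ C).

Definition ld (F : clauseset) (x : lit) : nat := #|` [fset C in F | x \in C]|.
Definition vdeg (F : clauseset) (v : var_t) : nat := ld F (pos v) + ld F (neg v).

(* extended naturals: None = +infinity *)
Definition omin (a b : option nat) : option nat :=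
  match a, b with
  | None, _ => b
  | _, None => a
  | Some x, Some y => Some (minn x y)
  end.
Definition ole (a b : option nat) : bool :=
  match a, b with
  | _, None => true
  | None, Some _ => false
  | Some x, Some y => x <= y
  end.

Definition minvdeg (F : clauseset) : option nat :=
  foldr (fun v acc => omin (Some (vdeg F v)) acc) None (enum_fset (var F)).

Definition singular (F : clauseset) (v : var_t) : bool :=
  (v \in var F) && (minn (ld F (pos v)) (ld F (neg v)) == 1).

Definition DP (v : var_t) (F : clauseset) : clauseset :=
  [fset C in F | v \notin var_cl C] `|`
  [fset (CD.1 `|` CD.2) `\` [fset pos v; neg v] | CD in F `*` F
     & CD.1 `&` compl_cl CD.2 == [fset pos v]].

Definition sDP_step (F F' : clauseset) : Prop :=
  exists v, singular F v /\ F' = DP v F.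

Definition sDP_star : clauseset -> clauseset -> Prop := clos_refl_trans clauseset sDP_step.

(* Main.v *)
Require Import Defs.
From mathcomp Require Import all_boot finmap.
From Stdlib Require Import Relations.
Set Implicit Arguments. Unset Strict Implicit. Unset Printing Implicit Defensive.
Local Open Scope fset_scope.

Lemma lit_sat_compl f y : lit_sat f (compl y) = ~~ lit_sat f y.
Proof. by case: y => n b; rewrite /lit_sat /compl /=; case: (f n); case: b. Qed.

Lemma compl_inv y : compl (compl y) = y.
Proof. by case: y => n b; rewrite /compl /= negbK. Qed.

Lemma cl_satP f (C : clause) : reflect (exists2 y, y \in C & lit_sat f y) (cl_sat f C).
Proof.
apply: (iffP existsP) => [[[y Hy] /= H]|[y Hy H]]; first by exists y.
by exists [` Hy].
Qed.

Lemma cs_satP f (F : clauseset) : reflect (forall C, C \in F -> cl_sat f C) (cs_sat f F).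
Proof.
apply: (iffP forallP) => [H C HC|H [C HC]] /=; last exact: H.
exact: (H [` HC]).
Qed.

Lemma var_clP n (C : clause) : reflect (exists2 y, y \in C & y.1 = n) (n \in var_cl C).
Proof.
apply: (iffP idP) => [/imfsetP [y /= Hy ->]|[y Hy <-]]; first by exists y.
by apply/imfsetP; exists y.
Qed.

Lemma varP n (F : clauseset) : reflect (exists2 C, C \in F & n \in var_cl C) (n \in var F).
Proof.
rewrite /var; apply: (iffP idP) => [/bigfcupP [C /andP [HC _] H]|[C HC H]]; first by exists C.
by apply/bigfcupP; exists C; rewrite ?HC.
Qed.

Lemma is_clauseP (C : clause) y : is_clause C -> y \in C -> compl y \in C -> False.
Proof.
move=> /eqP H Hy Hc.
have : compl y \in C `&` compl_cl C.
  by rewrite in_fsetI Hc; apply/imfsetP; exists y.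
by rewrite H.
Qed.

Lemma falsified_clause f (C : clause) : (forall y, y \in C -> ~~ lit_sat f y) -> is_clause C.
Proof.
move=> H; apply/eqP/fsetP => y; rewrite in_fsetI in_fset0.
apply/negP => /andP [Hy /imfsetP [z /= Hz Ez]].
have := H _ Hy; have := H _ Hz; rewrite Ez lit_sat_compl.
by case: (lit_sat f z).
Qed.

Lemma lit_var_v y v : y.1 = v -> y = pos v \/ y = neg v.
Proof. by case: y => n [] /= ->; [left|right]. Qed.

Definition upd (g : nat -> bool) n b := fun k => if k == n then b else g k.

Lemma lit_sat_upd g n b y : y.1 != n -> lit_sat (upd g n b) y = lit_sat g y.
Proof. by rewrite /lit_sat /upd => /negbTE ->. Qed.

Lemma cl_sat_upd g n b (C : clause) : (forall y, y \in C -> y.1 != n) ->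
  cl_sat (upd g n b) C = cl_sat g C.
Proof.
move=> H; apply/cl_satP/cl_satP => [[y Hy S]|[y Hy S]]; exists y => //.
  by rewrite -(lit_sat_upd _ b (H _ Hy)).
by rewrite lit_sat_upd ?H.
Qed.

Lemma ole_trans a b c : ole a b -> ole b c -> ole a c.
Proof.
case: a => [a|]; case: b => [b|]; case: c => [c|] //=; exact: leq_trans.
Qed.

Lemma foldr_le (h : nat -> nat) (s : seq nat) u : u \in s ->
  ole (foldr (fun v acc => omin (Some (h v)) acc) None s) (Some (h u)).
Proof.
elim: s => //= a s IH; rewrite inE => /orP [/eqP ->|Hu].
  by case: (foldr _ _ _) => [x|] //=; rewrite geq_minl.
move: (IH Hu); case: (foldr _ _ _) => [x|] //= Hx.
by rewrite geq_min Hx orbT.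
Qed.

Lemma foldr_att (h : nat -> nat) (s : seq nat) :
  foldr (fun v acc => omin (Some (h v)) acc) None s = None \/
  exists2 w, w \in s & foldr (fun v acc => omin (Some (h v)) acc) None s = Some (h w).
Proof.
elim: s => [|a s [IH|[w Hw IH]]] /=; first by left.
  by right; exists a; rewrite ?inE ?eqxx // IH.
rewrite IH /=; right; rewrite /minn; case: ltnP => _.
  by exists a; rewrite ?inE ?eqxx.
by exists w; rewrite // inE Hw orbT.
Qed.

Lemma minvdeg_le F u : u \in var F -> ole (minvdeg F) (Some (vdeg F u)).
Proof. by move=> Hu; apply: foldr_le. Qed.

Lemma minvdeg_att F : minvdeg F = None \/
  exists2 w, w \in var F & minvdeg F = Some (vdeg F w).
Proof. exact: foldr_att. Qed.

Lemma minvdeg_mono F G :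
  (forall w, w \in var G -> exists2 u, u \in var F & vdeg F u <= vdeg G w) ->
  ole (minvdeg F) (minvdeg G).
Proof.
move=> H; case: (minvdeg_att G) => [->|[w Hw ->]]; first by case: (minvdeg F).
have [u Hu Le] := H w Hw.
by apply: (ole_trans (minvdeg_le Hu)).
Qed.

Lemma ldE (F : clauseset) (x : lit) (C : clause) : (C \in [fset C in F | x \in C]) = (C \in F) && (x \in C).
Proof. by rewrite !inE. Qed.

Lemma ld_inj (A : {fset clause}) (G : clauseset) (x : lit) (g : clause -> clause) :
  {in A &, injective g} -> (forall C, C \in A -> (g C \in G) && (x \in g C)) ->
  #|` A| <= ld G x.
Proof.
move=> Hi Hg; rewrite -(eqP (introT (card_in_imfsetP _ _) Hi)); apply: fsubset_leq_card.
apply/fsubsetP => D /imfsetP [C /= HC ->]; by rewrite ldE Hg.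
Qed.

Lemma ld_ge1 (G : clauseset) x (C : clause) : C \in G -> x \in C -> 1 <= ld G x.
Proof.
move=> HC Hx; rewrite cardfs_gt0; apply/fset0Pn; exists C; by rewrite ldE HC.
Qed.

Lemma ld1 (F : clauseset) x : ld F x = 1 -> exists C0, [/\ C0 \in F, x \in C0 &
  forall C, C \in F -> x \in C -> C = C0].
Proof.
move=> /eqP /cardfs1P [C0 E]; exists C0.
have : C0 \in [fset C in F | x \in C] by rewrite E inE.
rewrite ldE => /andP [H1 H2]; split => // C HC Hx.
have : C \in [fset C in F | x \in C] by rewrite ldE HC.
by rewrite E inE => /eqP.
Qed.

Lemma vdeg_lit (F : clauseset) (p : lit) : vdeg F p.1 = (ld F p + ld F (compl p))%N.
Proof. by case: p => n [] //=; rewrite /vdeg addnC. Qed.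

Lemma compl_clP z (C : clause) : (z \in compl_cl C) = (compl z \in C).
Proof.
apply/imfsetP/idP => [[y /= Hy ->]|H]; first by rewrite compl_inv.
by exists (compl z); rewrite ?compl_inv.
Qed.

Lemma cs_clause (F : clauseset) C : is_clauseset F -> C \in F -> is_clause C.
Proof. by move=> /forallP H HC; exact: (H [` HC]). Qed.

Lemma MU_sat_minus F C : min_unsat F -> C \in F -> exists f, cs_sat f (F `\ C).
Proof. by case=> _ [_ H] HC; apply: H. Qed.

Lemma MU_fals F C f : min_unsat F -> C \in F -> cs_sat f (F `\ C) -> ~~ cl_sat f C.
Proof.
case=> _ [Hu _] HC Hf; apply/negP => HfC; apply: Hu; exists f.
apply/cs_satP => E HE; have [->//|Ne] := eqVneq E C.
by move/cs_satP: Hf; apply; rewrite in_fsetD1 Ne.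
Qed.

Lemma lit_sat_upd_v g n b y : y.1 = n -> lit_sat (upd g n b) y = (b == y.2).
Proof. by rewrite /lit_sat /upd => ->; rewrite eqxx. Qed.

Lemma fals_not_sat f (C : clause) : (forall y, y \in C -> ~~ lit_sat f y) -> ~~ cl_sat f C.
Proof. by move=> H; apply/negP => /cl_satP [y Hy S]; move: (H _ Hy); rewrite S. Qed.

Lemma pure_lit F C x : min_unsat F -> C \in F -> x \in C ->
  exists2 E, E \in F & compl x \in E.
Proof.
move=> HF HC Hx; have [g Hg] := MU_sat_minus HF HC.
have Hfal := MU_fals HF HC Hg.
case: (boolP [exists E : F, compl x \in val E]) => [/existsP [[E HE] /= H]|Hn].
  by exists E.
exfalso; case: HF => _ [Hu _]; apply: Hu; exists (upd g x.1 x.2).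
apply/cs_satP => E HE.
case: (boolP (x \in E)) => HxE.
  by apply/cl_satP; exists x => //; rewrite lit_sat_upd_v // eqxx.
have HEC : E != C by apply: contraNneq HxE => ->.
rewrite cl_sat_upd; last first.
  move=> y Hy; apply/eqP => Ey.
  have : y = x \/ y = compl x.
    by case: (y) (x) Ey => n b [n' b'] /= ->; case: b; case: b'; auto.
  case=> Ey'; subst y; first by rewrite Hy in HxE.
  by move/existsP: Hn; apply; exists [` HE].
by move/cs_satP: Hg; apply; rewrite in_fsetD1 HEC.
Qed.

Section Step.
Variables (F : clauseset) (v : nat) (p : lit) (C0 : clause).
Hypotheses (HF : min_unsat F) (Hpv : p.1 = v) (HC0 : C0 \in F) (HpC0 : p \in C0)
  (Huniq : forall C, C \in F -> p \in C -> C = C0).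

Let q := compl p.

Lemma lit_v y : y.1 = v -> y = p \/ y = q.
Proof.
rewrite /q; case: p Hpv => n b /= ->; case: y => n' b' /= ->.
by case: b; case: b'; auto.
Qed.

Lemma q1 : q.1 = v. Proof. by []. Qed.

Lemma FC C : C \in F -> is_clause C.
Proof. by case: HF => H _; apply: cs_clause. Qed.

Lemma qC0 : q \notin C0.
Proof. apply/negP => H; exact: (is_clauseP (FC HC0) HpC0 H). Qed.

Lemma var_cl_v C : (v \in var_cl C) = (p \in C) || (q \in C).
Proof.
apply/var_clP/orP => [[y Hy /lit_v [] <-]|[H|H]]; auto.
  by exists p.
by exists q.
Qed.

Definition R (D : clause) : clause := (C0 `|` D) `\` [fset pos v; neg v].

Lemma inR y D : (y \in R D) = (y.1 != v) && ((y \in C0) || (y \in D)).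
Proof.
rewrite /R in_fsetD in_fsetU !inE.
have -> : ~~ ((y == pos v) || (y == neg v)) = (y.1 != v); last by [].
case: y => n b /=; rewrite /pos /neg; case: (eqVneq n v) => [->|Hn] /=.
  by case: b; rewrite eqxx ?orbT.
by rewrite !xpair_eqE (negbTE Hn).
Qed.

Lemma sep D : D \in F -> q \in D -> exists f,
  [/\ forall y, y \in R D -> ~~ lit_sat f y,
      forall E, E \in F -> E != D -> cl_sat f E,
      ~~ lit_sat f q &
      forall D', D' \in F -> q \in D' -> D' != D -> cl_sat f (R D')].
Proof.
move=> HD HqD; have [f0 Hf0] := MU_sat_minus HF HD.
have Hfal := MU_fals HF HD Hf0.
have HE : forall E, E \in F -> E != D -> cl_sat f0 E.
  by move=> E HE Ne; move/cs_satP: Hf0; apply; rewrite in_fsetD1 Ne.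
have Hq : ~~ lit_sat f0 q.
  by apply: contra Hfal => H; apply/cl_satP; exists q.
pose f1 := upd f0 v (~~ p.2).
have f1q : lit_sat f1 q.
  by rewrite /f1 /q /lit_sat /upd /= Hpv eqxx.
have Hf1 : ~~ cl_sat f1 C0.
  apply/negP => H; case: HF => _ [Hu _]; apply: Hu; exists f1.
  apply/cs_satP => C HC.
  case Cq: (q \in C); first by apply/cl_satP; exists q.
  case Cp: (p \in C); first by rewrite (Huniq HC Cp).
  rewrite cl_sat_upd; last first.
    move=> y Hy; apply/eqP => /lit_v [] Ey; subst y; [by rewrite Hy in Cp|by rewrite Hy in Cq].
  apply: HE => //; apply/eqP => E; subst C; by rewrite HqD in Cq.
exists f0; split => //.
- move=> y; rewrite inR => /andP [Hyv /orP [Hy|Hy]].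
    rewrite -(lit_sat_upd f0 (~~ p.2) Hyv); apply: contra Hf1 => H.
    by apply/cl_satP; exists y.
  by apply: contra Hfal => H; apply/cl_satP; exists y.
- move=> D' HD' HqD' Ne; have /cl_satP [y Hy Sy] := HE _ HD' Ne.
  apply/cl_satP; exists y => //; rewrite inR Hy orbT andbT.
  apply/eqP => /lit_v [] Ey; subst y.
    by have := is_clauseP (FC HD') Hy HqD'.
  by rewrite Sy in Hq.
Qed.

Lemma DP_mem E : E \in DP v F -> (E \in F /\ v \notin var_cl E) \/
  exists D, [/\ D \in F, q \in D & E = R D].
Proof.
rewrite /DP in_fsetU => /orP [|H].
  by rewrite !inE => /andP [? ?]; left.
right; move/imfsetP: H => [[C1 C2] /=]; rewrite !inE /= => /andP [/andP [H1 H2] /eqP HI] ->.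
have Hpos : pos v \in C1 `&` compl_cl C2 by rewrite HI inE.
rewrite in_fsetI compl_clP /= in Hpos; case/andP: Hpos => P1 N2.
case Ep: (p.2).
- have pp : p = pos v by rewrite /pos -Hpv -Ep; case: (p).
  have E1 : C1 = C0 by apply: Huniq; rewrite ?pp.
  exists C2; split => //; first by rewrite /q pp.
  by rewrite E1.
- have pn : p = neg v by rewrite /neg -Hpv -Ep; case: (p).
  have E2 : C2 = C0 by apply: Huniq; rewrite ?pn.
  exists C1; split => //; first by rewrite /q pn.
  by rewrite E2 /R fsetUC.
Qed.

Lemma DP_kept E : E \in F -> v \notin var_cl E -> E \in DP v F.
Proof. by move=> H1 H2; rewrite /DP in_fsetU !inE H1 H2. Qed.

Lemma DP_res D : D \in F -> q \in D -> R D \in DP v F.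
Proof.
move=> HD HqD; have [f [Hf _ _ _]] := sep HD HqD.
have noclash : forall z, z.1 != v -> z \in C0 `|` D -> compl z \in C0 `|` D -> False.
  move=> z Hz Iz Icz.
  have := Hf z; have := Hf (compl z); rewrite !inR /= Hz -!in_fsetU Iz Icz /=.
  by rewrite lit_sat_compl; case: (lit_sat f z) => /(_ isT) + /(_ isT).
have key : forall C1 C2, C1 \in F -> C2 \in F -> pos v \in C1 -> neg v \in C2 ->
    C1 `|` C2 = C0 `|` D ->
    (C1 `|` C2) `\` [fset pos v; neg v] \in DP v F.
  move=> C1 C2 H1 H2 P1 N2 EU.
  rewrite /DP in_fsetU; apply/orP; right; apply/imfsetP; exists (C1, C2) => //=.
  rewrite !inE /= H1 H2 /=; apply/eqP/fsetP => z; rewrite in_fsetI compl_clP !inE.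
  apply/andP/eqP => [[Z1 Z2]|->]; last by [].
  case: (eqVneq z.1 v) => Hz.
    case: (lit_var_v Hz) => // Ez; subst z.
    by have := is_clauseP (FC H1) P1 Z1.
  by exfalso; apply: (noclash z Hz); rewrite -EU in_fsetU ?Z1 ?Z2 ?orbT.
case Ep: (p.2).
- have pp : p = pos v by rewrite /pos -Hpv -Ep; case: (p).
  have nq : q = neg v by rewrite /q pp.
  by apply: key; rewrite // -?nq -?pp.
- have pn : p = neg v by rewrite /neg -Hpv -Ep; case: (p).
  have nq : q = pos v by rewrite /q pn.
  by rewrite /R fsetUC; apply: key; rewrite // -?nq -?pn // fsetUC.
Qed.

Lemma other_lits C : C \in F -> p \notin C -> q \notin C ->
  (v \notin var_cl C) /\ (forall y, y \in C -> y.1 != v).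
Proof.
move=> HC Hp Hq; split; first by rewrite var_cl_v negb_or Hp Hq.
move=> y Hy; apply/eqP => /lit_v [] Ey; subst y; by [rewrite Hy in Hp|rewrite Hy in Hq].
Qed.

Lemma q2 : q.2 = ~~ p.2. Proof. by []. Qed.

Lemma S_unsat : ~ satisfiable (DP v F).
Proof.
move=> [h /cs_satP Hh]; case: HF => _ [Hu _]; apply: Hu.
have kept : forall g C, C \in F -> p \notin C -> q \notin C ->
    cl_sat (upd h v g) C.
  move=> g C HC Hp Hq; have [Hv Hy] := other_lits HC Hp Hq.
  by rewrite cl_sat_upd //; apply: Hh; apply: DP_kept.
case: (boolP (cl_sat h (R fset0))) => [/cl_satP [y0 Hy0 S0]|Hn].
- exists (upd h v q.2); apply/cs_satP => C HC.
  case: (boolP (q \in C)) => Hq.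
    by apply/cl_satP; exists q => //; rewrite lit_sat_upd_v ?eqxx.
  case: (boolP (p \in C)) => Hp; last exact: kept.
  rewrite (Huniq HC Hp); move: Hy0; rewrite inR inE orbF => /andP [Hv Hy0].
  by apply/cl_satP; exists y0 => //; rewrite lit_sat_upd.
- exists (upd h v p.2); apply/cs_satP => C HC.
  case: (boolP (p \in C)) => Hp.
    by apply/cl_satP; exists p => //; rewrite lit_sat_upd_v ?eqxx.
  case: (boolP (q \in C)) => Hq; last exact: kept.
  have /cl_satP [y Hy Sy] := Hh _ (DP_res HC Hq).
  move: (Hy); rewrite inR => /andP [Hv /orP [Hy1|Hy1]].
    by move: Hn; rewrite (_ : cl_sat h (R fset0)) //; apply/cl_satP; exists y; rewrite // inR Hv Hy1.
  by apply/cl_satP; exists y => //; rewrite lit_sat_upd.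
Qed.

Lemma Rinj D1 D2 : D1 \in F -> q \in D1 -> D2 \in F -> q \in D2 -> R D1 = R D2 -> D1 = D2.
Proof.
move=> H1 Q1 H2 Q2 E; apply/eqP/negPn/negP => Ne.
have [f [Hf _ _ Hr]] := sep H1 Q1.
have := Hr _ H2 Q2; rewrite eq_sym Ne -E => /(_ isT).
by move/negP: (fals_not_sat Hf).
Qed.

Lemma R_kept D E : D \in F -> q \in D -> E \in F -> v \notin var_cl E -> R D != E.
Proof.
move=> HD QD HE Hv; apply/eqP => Ed.
have [f [Hf HEs _ _]] := sep HD QD.
have Ne : E != D by apply: contraNneq Hv => ->; rewrite var_cl_v QD orbT.
by move/negP: (fals_not_sat Hf); rewrite Ed; apply; apply: HEs.
Qed.

Lemma S_min E : E \in DP v F -> satisfiable (DP v F `\ E).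
Proof.
case/DP_mem => [[HE Hv]|[D [HD QD ->]]].
- have [g Hg] := MU_sat_minus HF HE.
  have HgF : forall C, C \in F -> C != E -> cl_sat g C.
    by move=> C HC Ne; move/cs_satP: Hg; apply; rewrite in_fsetD1 Ne.
  exists g; apply/cs_satP => E'; rewrite in_fsetD1 => /andP [Ne /DP_mem [[HE' _]|[D [HD QD ->]]]].
    exact: HgF.
  have NC0 : C0 != E by apply: contraNneq Hv => <-; rewrite var_cl_v HpC0.
  have ND : D != E by apply: contraNneq Hv => <-; rewrite var_cl_v QD orbT.
  have /cl_satP [y Hy Sy] := HgF _ HC0 NC0.
  case: (eqVneq y p) => [Eyp|Nyp].
    subst y; have /cl_satP [z Hz Sz] := HgF _ HD ND.
    apply/cl_satP; exists z => //; rewrite inR Hz orbT andbT.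
    apply/eqP => /lit_v [] Ez; subst z.
      by have := is_clauseP (FC HD) Hz QD.
    by move: Sz; rewrite /q lit_sat_compl Sy.
  apply/cl_satP; exists y => //; rewrite inR Hy andbT.
  apply/eqP => /lit_v [] Ez; subst y; first by rewrite eqxx in Nyp.
  by move: qC0; rewrite Hy.
- have [f [Hf HEs Hq Hr]] := sep HD QD.
  exists f; apply/cs_satP => E'; rewrite in_fsetD1 => /andP [Ne /DP_mem [[HE' Hv']|[D' [HD' QD' ED']]]].
    apply: HEs => //; apply: contraNneq Hv' => ->; by rewrite var_cl_v QD orbT.
  subst E'; apply: Hr => //; apply: contraNneq Ne => ->; by [].
Qed.

Lemma S_clauses : is_clauseset (DP v F).
Proof.
apply/forallP => [[E HE]] /=; case/DP_mem: HE => [[HE _]|[D [HD QD ->]]].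
  exact: FC.
by have [f [Hf _ _ _]] := sep HD QD; apply: falsified_clause Hf.
Qed.

Lemma S_MU : min_unsat (DP v F).
Proof. split; [exact: S_clauses|split; [exact: S_unsat|exact: S_min]]. Qed.

Lemma v_in_var : v \in var F.
Proof. by apply/varP; exists C0 => //; apply/var_clP; exists p. Qed.

Lemma varDP w : w \in var (DP v F) ->
  exists E y, [/\ E \in DP v F, y \in E & y.1 = w].
Proof. by move=> /varP [E HE /var_clP [y Hy Ey]]; exists E, y. Qed.

Lemma var_DP_nv w : w \in var (DP v F) -> w != v.
Proof.
case/varDP => E [y [HE Hy <-]]; case/DP_mem: HE => [[HE Hv]|[D [HD QD ED]]].
  by apply: contraNneq Hv => <-; apply/var_clP; exists y.
by move: Hy; rewrite ED inR => /andP [].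
Qed.

Lemma S_deg w : ld F p = 1 -> w \in var (DP v F) ->
  exists2 u, u \in var F & (vdeg F u <= vdeg (DP v F) w)%N.
Proof.
move=> Hld Hw; have Hwv := var_DP_nv Hw.
case: (boolP [exists x : C0, (val x).1 == w]) => [/existsP [[x Hx] /= /eqP Exw]|Hn].
- exists v; first exact: v_in_var.
  have Ev : vdeg F v = (ld F p + ld F q)%N by rewrite -Hpv vdeg_lit.
  have Ew : vdeg (DP v F) w = (ld (DP v F) x + ld (DP v F) (compl x))%N.
    by rewrite -Exw vdeg_lit.
  rewrite Ev Ew Hld add1n.
  have Hxv : x.1 != v by rewrite Exw.
  rewrite -addn1; apply: leq_add.
    apply: (@ld_inj _ _ _ R).
      move=> D1 D2; rewrite !ldE => /andP [H1 Q1] /andP [H2 Q2]; exact: Rinj.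
    move=> D; rewrite ldE => /andP [HD QD]; by rewrite DP_res //= inR Hx Hxv.
  have [E HE HcE] := pure_lit HF HC0 Hx.
  apply: (@ld_ge1 _ _ E) => //; apply: DP_kept => //.
  rewrite var_cl_v negb_or; apply/andP; split.
    apply/negP => HpE; move: HcE; rewrite (Huniq HE HpE) => Hc.
    by have := is_clauseP (FC HC0) Hx Hc.
  apply/negP => QE; have [f [Hf _ _ _]] := sep HE QE.
  have := Hf x; have := Hf (compl x); rewrite !inR /= Hxv Hx HcE orbT /= lit_sat_compl.
  by case: (lit_sat f x) => /(_ isT) + /(_ isT).
- have noC0 : forall y, y \in C0 -> y.1 != w.
    move=> y Hy; apply/negP => /eqP Ey; move/existsP: Hn; apply; by exists [` Hy]; rewrite /= Ey.
  have noP : forall E y, E \in F -> y \in E -> y.1 = w -> p \notin E.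
    move=> E y HE Hy Ey; apply/negP => HpE; move: Hy; rewrite (Huniq HE HpE) => Hy.
    by move: (noC0 _ Hy); rewrite Ey eqxx.
  exists w.
    case/varDP: Hw => E [y [HE Hy Ey]]; case/DP_mem: HE => [[HE _]|[D [HD QD ED]]].
      by apply/varP; exists E => //; apply/var_clP; exists y.
    move: Hy; rewrite ED inR => /andP [_ /orP [Hy|Hy]].
      by move: (noC0 _ Hy); rewrite Ey eqxx.
    by apply/varP; exists D => //; apply/var_clP; exists y.
  have key : forall y, y.1 = w -> (ld F y <= ld (DP v F) y)%N.
    move=> y Ey.
    apply: (@ld_inj _ _ _ (fun E => if q \in E then R E else E)).
      move=> E1 E2; rewrite !ldE => /andP [H1 Y1] /andP [H2 Y2].
      have P1 := noP _ _ H1 Y1 Ey; have P2 := noP _ _ H2 Y2 Ey.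
      case: (boolP (q \in E1)) => Q1; case: (boolP (q \in E2)) => Q2.
      + exact: Rinj.
      + move=> Ee; have := R_kept H1 Q1 H2; rewrite var_cl_v negb_or P2 Q2 Ee eqxx.
        by move=> /(_ isT).
      + move=> Ee; have := R_kept H2 Q2 H1; rewrite var_cl_v negb_or P1 Q1 -Ee eqxx.
        by move=> /(_ isT).
      + by [].
    move=> E; rewrite ldE => /andP [HE Hy]; have PE := noP _ _ HE Hy Ey.
    case: (boolP (q \in E)) => QE.
      by rewrite DP_res //= inR Hy orbT Ey Hwv.
    by rewrite DP_kept // var_cl_v negb_or PE QE.
  by rewrite /vdeg; apply: leq_add; apply: key.
Qed.

End Step.

Lemma step F G : min_unsat F -> sDP_step F G -> min_unsat G /\ ole (minvdeg F) (minvdeg G).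
Proof.
move=> HF [v [/andP [Hv /eqP Hmin] ->]].
have [p [Hpv Hld]] : exists p : lit, p.1 = v /\ ld F p = 1.
  move: Hmin; rewrite /minn; case: ltnP => _ H; [exists (pos v)|exists (neg v)]; by [].
have [C0 [HC0 HpC0 Huniq]] := ld1 Hld.
split; first exact: (S_MU HF Hpv HC0 HpC0 Huniq).
apply: minvdeg_mono => w Hw; exact: (S_deg HF Hpv HC0 HpC0 Huniq Hld Hw).
Qed.

Theorem lemma5p4 (F F' : clauseset) :
  min_unsat F -> min_unsat F' -> sDP_star F F' ->
  ole (minvdeg F) (minvdeg F').
Proof.
move=> HF _ /clos_rt_rt1n_iff H; elim: H HF => [x _|x y z Hxy _ IH Hx].
  by case: (minvdeg x) => //= n; rewrite leqnn.
have [Hy Le] := step Hx Hxy; exact: ole_trans Le (IH Hy).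
Qed.
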